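(* The map $\mathfrak q:S^2\times S^1\to S^3$, $\mathfrak q(x,z)=u^{-1}zu$ for any $u\in S^3$ with $x=u^{-1}\mathbf iu$, has degree two.
   Context: $S^3$ is the group of unit quaternions, $S^2$ the unit purely imaginary quaternions, $S^1=\{a+b\mathbf i:a^2+b^2=1\}\subset S^3$; $\mathfrak q$ is well defined since $u$ is determined by $x$ up to left multiplication by elements of $S^1$, which commute with $z$. Orientations: $\mathbb H\cong\mathbb C^2$ via $(z,w)\mapsto z+w\mathbf j$ with complex orientation $dq^0\wedge dq^1\wedge dq^2\wedge dq^3$, spheres oriented as boundaries (outer normal first), with normalized volume forms $\omega_{S^1}=\frac1{2\pi\mathbf i}z^{-1}dz$, $\omega_{S^2}=-\frac1{8\pi}x\,dx\wedge dx$, $\omega_{S^3}=-\frac1{12\pi^2}\mathrm{Re}((q^{-1}dq)^{\wedge3})$; $S^2\times S^1$ carries the product orientation, so the degree is $\int_{S^2\times S^1}\mathfrak q^*\omega_{S^3}$ with $\omega_{S^2}\wedge\omega_{S^1}$ positive. *)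

(* Defs.v *)
From Stdlib Require Import Reals.
From Coquelicot Require Import Coquelicot.
Open Scope R_scope.

Record quat := Q { q0 : R; q1 : R; q2 : R; q3 : R }.

Definition qadd (p q : quat) : quat :=
  Q (q0 p + q0 q) (q1 p + q1 q) (q2 p + q2 q) (q3 p + q3 q).
Definition qscale (r : R) (q : quat) : quat :=
  Q (r * q0 q) (r * q1 q) (r * q2 q) (r * q3 q).
Definition qopp (q : quat) : quat := qscale (-1) q.

Definition qmul (p q : quat) : quat :=
  Q (q0 p * q0 q - q1 p * q1 q - q2 p * q2 q - q3 p * q3 q)
    (q0 p * q1 q + q1 p * q0 q + q2 p * q3 q - q3 p * q2 q)
    (q0 p * q2 q - q1 p * q3 q + q2 p * q0 q + q3 p * q1 q)
    (q0 p * q3 q + q1 p * q2 q - q2 p * q1 q + q3 p * q0 q).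

Definition qconj (q : quat) : quat := Q (q0 q) (- q1 q) (- q2 q) (- q3 q).
Definition qnorm2 (q : quat) : R :=
  q0 q * q0 q + q1 q * q1 q + q2 q * q2 q + q3 q * q3 q.
Definition qinv (q : quat) : quat := qscale (/ qnorm2 q) (qconj q).
Definition qRe (q : quat) : R := q0 q.

Definition qone : quat := Q 1 0 0 0.
Definition qi : quat := Q 0 1 0 0.

Definition in_S3 (q : quat) : Prop := qnorm2 q = 1.
Definition in_S2 (x : quat) : Prop := q0 x = 0 /\ qnorm2 x = 1.
Definition in_S1 (z : quat) : Prop := q2 z = 0 /\ q3 z = 0 /\ qnorm2 z = 1.

(** Normalized volume forms, evaluated on tangent vectors (as in the paper):
    omega_S1 = (1/(2 pi i)) z^{-1} dz,
    omega_S2 = -(1/(8 pi)) x dx /\ dx,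
    omega_S3 = -(1/(12 pi^2)) Re((q^{-1} dq)^{/\ 3}),
    with the wedge of (quaternion-valued) 1-forms
    (a /\ b /\ c)(v1,v2,v3) = sum_sigma sgn(sigma) a(v_s1) b(v_s2) c(v_s3). *)
Definition omega_S1 (z v : quat) : R :=
  (* 1/(2 pi i) * w = (1/(2 pi)) * (-i) * w ; real for tangent v *)
  qRe (qscale (/ (2 * PI)) (qmul (qopp qi) (qmul (qinv z) v))).

Definition omega_S2 (x v w : quat) : R :=
  qRe (qscale (- / (8 * PI)) (qadd (qmul x (qmul v w)) (qopp (qmul x (qmul w v))))).

Definition triple (a b c : quat) : quat := qmul a (qmul b c).

Definition omega_S3 (q v1 v2 v3 : quat) : R :=
  let a1 := qmul (qinv q) v1 in
  let a2 := qmul (qinv q) v2 in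
  let a3 := qmul (qinv q) v3 in
  - / (12 * PI ^ 2) *
  (qRe (triple a1 a2 a3) + qRe (triple a2 a3 a1) + qRe (triple a3 a1 a2)
   - qRe (triple a1 a3 a2) - qRe (triple a2 a1 a3) - qRe (triple a3 a2 a1)).

Definition qderive (g : R -> quat) (s : R) : quat :=
  Q (Derive (fun s => q0 (g s)) s) (Derive (fun s => q1 (g s)) s)
    (Derive (fun s => q2 (g s)) s) (Derive (fun s => q3 (g s)) s).

(** A parametrization of S^2 x S^1 by (theta, phi, t) in [0,pi]x[0,2pi]x[0,2pi],
    bijective off a null set: spherical coordinates on S^2 (in the imaginary
    quaternions, with i as polar axis) and z = cos t + i sin t on S^1. *)
Definition sph (th ph : R) : quat :=
  Q 0 (cos th) (sin th * cos ph) (sin th * sin ph).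
Definition circ (t : R) : quat := Q (cos t) (sin t) 0 0.

Definition sgnR (r : R) : R :=
  if Rlt_dec 0 r then 1 else if Rlt_dec r 0 then -1 else 0.

(** Integrand of f^* omega_S3 in the chart, times the sign of the chart
    orientation with respect to the product orientation omega_S2 /\ omega_S1. *)
Definition pullback_density (f : quat -> quat -> quat) (th ph t : R) : R :=
  let x := sph th ph in
  let z := circ t in
  let dth_x := qderive (fun s => sph s ph) th in
  let dph_x := qderive (fun s => sph th s) ph in
  let dt_z := qderive circ t in
  let F := fun th ph t => f (sph th ph) (circ t) in
  omega_S3 (F th ph t)
    (qderive (fun s => F s ph t) th)
    (qderive (fun s => F th s t) ph)
    (qderive (fun s => F th ph s) t)
  * sgnR (omega_S2 x dth_x dph_x * omega_S1 z dt_z).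

(** Degree of a (smooth) map f : S^2 x S^1 -> S^3, as in the paper:
    deg f = int_{S^2 x S^1} f^* omega_S3, computed in the chart above. *)
Definition degree_S2S1_S3 (f : quat -> quat -> quat) : R :=
  RInt (fun th =>
    RInt (fun ph =>
      RInt (fun t => pullback_density f th ph t) 0 (2 * PI)) 0 (2 * PI)) 0 PI.

(* Main.v *)
Require Import Defs.
From Stdlib Require Import Reals Lra Nsatz.
From Coquelicot Require Import Coquelicot.
Open Scope R_scope.

Definition gq (x z : quat) : quat := Q (q0 z) (q1 z * q1 x) (q1 z * q2 x) (q1 z * q3 x).

Lemma conjL (u z : quat) : qnorm2 u = 1 -> q2 z = 0 -> q3 z = 0 ->
  qmul (qinv u) (qmul z u) = gq (qmul (qinv u) (qmul qi u)) z.
Proof.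
intros Hn H2 H3. unfold qinv. rewrite Hn, Rinv_1.
destruct u as [a b c d]; destruct z as [e f g h]; simpl in *; subst.
unfold qnorm2 in Hn; simpl in Hn.
unfold gq, qmul, qscale, qconj, qi; simpl; f_equal; nsatz.
Qed.

Lemma exists_u (x : quat) : in_S2 x -> exists u, in_S3 u /\ x = qmul (qinv u) (qmul qi u).
Proof.
intros [H0 Hn]. destruct x as [a b c d]; simpl in H0; subst a.
unfold qnorm2 in Hn; simpl in Hn.
destruct (Req_dec b (-1)) as [Hb|Hb].
- subst b. assert (c = 0 /\ d = 0) as [-> ->] by (split; nra).
  exists (Q 0 0 1 0). split. unfold in_S3, qnorm2; simpl; ring.
  unfold qinv, qnorm2, qmul, qscale, qconj, qi; simpl. f_equal; field.
- assert (Hp : 0 < 2*(1+b)) by nra.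
  set (k := / sqrt (2*(1+b))).
  assert (Hk : k * k * (2*(1+b)) = 1).
  { unfold k. rewrite <- Rinv_mult, sqrt_sqrt by lra. field. lra. }
  clearbody k. exists (qscale k (Q (1+b) 0 d (-c))).
  assert (HN : qnorm2 (qscale k (Q (1+b) 0 d (-c))) = 1).
  { unfold qnorm2; simpl. transitivity (k*k*(2*(1+b))); [|exact Hk]. clear -Hn. nsatz. }
  split. exact HN.
  unfold qinv. rewrite HN, Rinv_1.
  unfold qmul, qscale, qconj, qi; simpl. clear HN Hb Hp. f_equal; match goal with |- ?v = _ => transitivity (v * (k*k*(2*(1+b)))); [rewrite Hk; ring | clear Hk; nsatz] end.
Qed.

Lemma frq_gq frq :
    (forall x z u : quat,
        in_S2 x -> in_S1 z -> in_S3 u ->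
        x = qmul (qinv u) (qmul qi u) ->
        frq x z = qmul (qinv u) (qmul z u)) ->
  forall x z, in_S2 x -> in_S1 z -> frq x z = gq x z.
Proof.
intros H x z Hx Hz. destruct (exists_u x Hx) as [u [Hu Hxu]].
rewrite (H x z u Hx Hz Hu Hxu). destruct Hz as [H2 [H3 _]].
rewrite conjL by assumption. rewrite <- Hxu. reflexivity.
Qed.
Lemma om3 (ct st cth sth cph sph : R) :
  ct*ct + st*st = 1 -> cth*cth + sth*sth = 1 -> cph*cph+sph*sph = 1 ->
  omega_S3 (Q ct (st*cth) (st*(sth*cph)) (st*(sth*sph)))
    (Q 0 (- (st*sth)) (st*(cth*cph)) (st*(cth*sph)))
    (Q 0 0 (st*(- (sth*sph))) (st*(sth*cph)))
    (Q (-st) (ct*cth) (ct*(sth*cph)) (ct*(sth*sph)))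
  = st*st*sth / (2*PI^2).
Proof.
intros H1 H2 H3.
assert (HN : qnorm2 (Q ct (st*cth) (st*(sth*cph)) (st*(sth*sph))) = 1).
{ unfold qnorm2; simpl. nsatz. }
unfold omega_S3. unfold qinv. rewrite HN, Rinv_1.
assert (PI <> 0) by (generalize PI_RGT_0; lra).
unfold triple, qRe, qmul, qscale, qconj; simpl.
match goal with |- - / _ * ?P = _ => replace P with (-6*(st*st*sth)) by (clear HN H; nsatz) end.
field. auto.
Qed.
Lemma om2 (cth sth cph sph : R) :
  cth*cth + sth*sth = 1 -> cph*cph+sph*sph = 1 ->
  omega_S2 (Q 0 cth (sth*cph) (sth*sph)) (Q 0 (-sth) (cth*cph) (cth*sph))
     (Q 0 0 (-(sth*sph)) (sth*cph)) = sth / (4*PI).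
Proof.
intros H2 H3. assert (PI <> 0) by (generalize PI_RGT_0; lra).
unfold omega_S2, qRe, qadd, qopp, qmul, qscale; simpl.
match goal with |- _ * ?P = _ => replace P with (-2*sth) by (clear H; nsatz) end.
field. auto.
Qed.

Lemma om1 (ct st : R) : ct*ct+st*st = 1 -> omega_S1 (Q ct st 0 0) (Q (-st) ct 0 0) = / (2*PI).
Proof.
intros H. assert (PI <> 0) by (generalize PI_RGT_0; lra).
unfold omega_S1, qinv, qRe, qopp, qmul, qscale, qconj, qnorm2, qi; simpl.
replace (ct * ct + st * st + 0 * 0 + 0 * 0) with 1 by lra.
rewrite Rinv_1. match goal with |- _ * ?P = _ => replace P with 1 by (clear H0; nsatz) end; ring.
Qed.

Lemma d1 th ph t : qderive (fun s => gq (sph s ph) (circ t)) th =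
  Q 0 (- (sin t*sin th)) (sin t*(cos th*cos ph)) (sin t*(cos th*sin ph)).
Proof.
unfold qderive, gq, sph, circ; simpl; f_equal; apply is_derive_unique; auto_derive; auto; ring.
Qed.
Lemma d2 th ph t : qderive (fun s => gq (sph th s) (circ t)) ph =
  Q 0 0 (sin t*(- (sin th*sin ph))) (sin t*(sin th*cos ph)).
Proof.
unfold qderive, gq, sph, circ; simpl; f_equal; apply is_derive_unique; auto_derive; auto; ring.
Qed.
Lemma d3 th ph t : qderive (fun s => gq (sph th ph) (circ s)) t =
  Q (- sin t) (cos t*cos th) (cos t*(sin th*cos ph)) (cos t*(sin th*sin ph)).
Proof.
unfold qderive, gq, sph, circ; simpl; f_equal; apply is_derive_unique; auto_derive; auto; ring.
Qed.
Lemma d4 th ph : qderive (fun s => sph s ph) th = Q 0 (-sin th) (cos th*cos ph) (cos th*sin ph).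
Proof.
unfold qderive, sph; simpl; f_equal; apply is_derive_unique; auto_derive; auto; ring.
Qed.
Lemma d5 th ph : qderive (fun s => sph th s) ph = Q 0 0 (-(sin th*sin ph)) (sin th*cos ph).
Proof.
unfold qderive, sph; simpl; f_equal; apply is_derive_unique; auto_derive; auto; ring.
Qed.
Lemma d6 t : qderive circ t = Q (-sin t) (cos t) 0 0.
Proof.
unfold qderive, circ; simpl; f_equal; apply is_derive_unique; auto_derive; auto; ring.
Qed.

Lemma sc x : cos x * cos x + sin x * sin x = 1.
Proof. generalize (sin2_cos2 x); unfold Rsqr; lra. Qed.

Lemma dens_g th ph t : 0 < th < PI ->
  pullback_density gq th ph t = sin t * sin t * sin th / (2*PI^2).
Proof.
intros Hth. unfold pullback_density; cbv zeta.
rewrite d1, d2, d3, d4, d5, d6.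
replace (gq (sph th ph) (circ t)) with
  (Q (cos t) (sin t*cos th) (sin t*(sin th*cos ph)) (sin t*(sin th*sin ph))) by reflexivity.
unfold sph, circ.
rewrite om3, om2, om1.
2-7: apply sc.
assert (Hs : 0 < sin th) by (apply sin_gt_0; lra).
assert (HP := PI_RGT_0).
unfold sgnR. destruct (Rlt_dec 0 (sin th / (4 * PI) * / (2 * PI))) as [_|n]; [ring|].
exfalso; apply n. apply Rmult_lt_0_compat; [apply Rdiv_lt_0_compat|apply Rinv_0_lt_compat]; lra.
Qed.
Lemma int_sin2 (C : R) : RInt (fun t => sin t * sin t * C) 0 (2*PI) = PI * C.
Proof.
apply is_RInt_unique.
set (G := fun t => (t - sin t * cos t) / 2 * C).
replace (PI * C) with (minus (G (2*PI)) (G 0)).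
2:{ unfold G, minus, plus, opp; simpl. rewrite sin_2PI, cos_2PI, sin_0, cos_0. field. }
apply (is_RInt_derive (V:=R_CompleteNormedModule) G (fun t => sin t * sin t * C)).
- intros x _. unfold G. auto_derive; auto.
  assert (H := sin2_cos2 x); unfold Rsqr in H. replace 1 with (sin x*sin x + cos x*cos x) at 1 by lra; field.
- intros x _. apply (ex_derive_continuous (fun t => sin t * sin t * C)). auto_derive; auto.
Qed.

Lemma int_sin : RInt (fun t => sin t) 0 PI = 2.
Proof.
apply is_RInt_unique.
replace 2 with (minus (- cos PI) (- cos 0)) by (unfold minus, plus, opp; simpl; rewrite cos_PI, cos_0; ring).
apply (is_RInt_derive (V:=R_CompleteNormedModule) (fun x => - cos x) sin).
- intros x _. auto_derive; auto; ring.
- intros x _. apply (ex_derive_continuous sin). auto_derive; auto.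
Qed.

Lemma int_const (C : R) : RInt (fun _ => C) 0 (2*PI) = 2*PI*C.
Proof. rewrite RInt_const. unfold scal; simpl; unfold mult; simpl. ring. Qed.

From Stdlib Require Import FunctionalExtensionality.

Lemma pd_ext frq :
    (forall x z u : quat,
        in_S2 x -> in_S1 z -> in_S3 u ->
        x = qmul (qinv u) (qmul qi u) ->
        frq x z = qmul (qinv u) (qmul z u)) ->
  forall th ph t, pullback_density frq th ph t = pullback_density gq th ph t.
Proof.
intros H th ph t.
assert (EF : forall a b c, frq (sph a b) (circ c) = gq (sph a b) (circ c)).
{ intros a b c.
  apply (frq_gq frq H).
  - split; [reflexivity|]. unfold qnorm2, sph; simpl.
    assert (h1 := sc a); assert (h2 := sc b). nsatz.
  - split; [reflexivity|split;[reflexivity|]]. unfold qnorm2, circ; simpl.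
    assert (h1 := sc c). nsatz. }
unfold pullback_density. cbv beta zeta.
rewrite (functional_extensionality (fun s => frq (sph s ph) (circ t)) (fun s => gq (sph s ph) (circ t))) by (intro; apply EF).
rewrite (functional_extensionality (fun s => frq (sph th s) (circ t)) (fun s => gq (sph th s) (circ t))) by (intro; apply EF).
rewrite (functional_extensionality (fun s => frq (sph th ph) (circ s)) (fun s => gq (sph th ph) (circ s))) by (intro; apply EF).
rewrite EF. reflexivity.
Qed.

Theorem lemma10 :
  forall frq : quat -> quat -> quat,
    (forall x z u : quat,
        in_S2 x -> in_S1 z -> in_S3 u ->
        x = qmul (qinv u) (qmul qi u) ->
        frq x z = qmul (qinv u) (qmul z u)) ->
    degree_S2S1_S3 frq = 2.
Proof.
intros frq H.
assert (HP := PI_RGT_0).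
unfold degree_S2S1_S3.
rewrite (RInt_ext _ (fun th => 2*PI*(PI*(sin th/(2*PI^2))))).
- rewrite (RInt_ext _ (fun th => sin th)). apply int_sin.
  intros x _. change (2*PI*(PI*(sin x/(2*PI^2))) = sin x). field. lra.
- intros th Hth. rewrite Rmin_left, Rmax_right in Hth by lra.
  rewrite (RInt_ext _ (fun _ => PI*(sin th/(2*PI^2)))).
  + apply int_const.
  + intros ph _.
    rewrite (RInt_ext _ (fun t => sin t*sin t*(sin th/(2*PI^2)))).
    * apply int_sin2.
    * intros t _. rewrite (pd_ext frq H), dens_g by lra. change (sin t * sin t * sin th / (2*PI^2) = sin t*sin t*(sin th/(2*PI^2))). field. lra.
Qed.
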